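(* Fix a set $\mathcal{X}$, a measure space $\mathcal{Y}$, and a real number $\alpha>1$. Suppose that for each $y\in\mathcal{Y}$ a topology is given on the fibre $\mathcal{X}\times\{y\}$, and that $\phi:\mathcal{X}\to\mathcal{X}$ is a function such that the induced map $(x,y)\mapsto(\phi(x),y)$ is continuous on each such fibre. Suppose further that $\gamma:\mathcal{X}\times\mathcal{Y}\to\mathbb{R}$ is a function which (1) is bounded; (2) is continuous on the fibres of $\mathcal{X}\times\mathcal{Y}\to\mathcal{Y}$; (3) is measurable on the fibres of $\mathcal{X}\times\mathcal{Y}\to\mathcal{X}$; and (4) vanishes off $\mathcal{X}\times W$ for some set $W\subseteq\mathcal{Y}$ of finite measure. Then there exists a unique bounded function $\hat{\gamma}:\mathcal{X}\times\mathcal{Y}\to\mathbb{R}$, continuous in the first coordinate and integrable in the second, with \[\gamma(x,y)=\hat{\gamma}(\phi(x),y)-\alpha\hat{\gamma}(x,y)\] for all $x\in\mathcal{X}$ and $y\in\mathcal{Y}$. *)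

(* Defs.v *)
From HB Require Import structures.
From mathcomp Require Import all_boot all_order all_algebra.
From mathcomp Require Import all_classical all_reals all_analysis.
Set Implicit Arguments. Unset Strict Implicit. Unset Printing Implicit Defensive.
Import Order.TTheory GRing.Theory Num.Theory numFieldNormedType.Exports.
Local Open Scope classical_set_scope.
Local Open Scope ring_scope.

Definition is_topology (X : Type) (O : set (set X)) : Prop :=
  [/\ O setT,
      (forall A B, O A -> O B -> O (A `&` B)) &
      (forall F : set (set X), F `<=` O -> O (\bigcup_(A in F) A))].

Definition cont_self (X : Type) (O : set (set X)) (f : X -> X) : Prop :=
  forall A, O A -> O (f @^-1` A).

Definition cont_real (X : Type) (R : realType) (O : set (set X)) (g : X -> R) : Prop :=
  forall A : set R, open A -> O (g @^-1` A).

Definition bounded_fun2 (X Y : Type) (R : realType) (g : X * Y -> R) : Prop :=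
  exists M : R, forall x y, `|g (x, y)| <= M.

(* Main.v *)
Require Import Defs.
From HB Require Import structures.
From mathcomp Require Import all_boot all_order all_algebra.
From mathcomp Require Import all_classical all_reals all_analysis.
From mathcomp Require Import ring lra.
From mathcomp Require Import measurable_realfun.
Import Order.TTheory GRing.Theory Num.Theory numFieldNormedType.Exports.
Local Open Scope classical_set_scope.
Local Open Scope ring_scope.

Lemma small_geo (R : realType) (b c e : R) : 0 <= b < 1 -> 0 < e ->
  exists n : nat, c * b ^+ n < e.
Proof.
move=> /andP[b0 b1] e0.
have hb : `|b| < 1 by rewrite ger0_norm.
have := cvg_geometric c hb.
move=> /cvgrPdist_lt /(_ e e0) [N _ hN].
exists N; have := hN N (leqnn N); rewrite /geometric /= sub0r normrN.
by move=> h; apply: le_lt_trans h; apply: ler_norm.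
Qed.

Lemma zero_geo (R : realType) (b c a : R) : 0 <= b < 1 ->
  (forall n, `|a| <= c * b ^+ n) -> a = 0.
Proof.
move=> hb ha; apply/eqP; apply/negPn/negP => a0.
have /(@small_geo _ b c _ hb) [n hn] : 0 < `|a| by rewrite normr_gt0.
by have := ha n; rewrite leNgt hn.
Qed.

Fixpoint Sq {R : realType} {X : Type} (b : R) (phi : X -> X) (g : X -> R) (n : nat) : X -> R :=
  match n with 0 => fun _ => 0 | n.+1 => fun x => b * (g x + Sq b phi g n (phi x)) end.

Lemma Sq_bound {R : realType} {X : Type} {b M B : R} {phi : X -> X} {g : X -> R} :
  0 <= b -> (forall x, `|g x| <= M) -> b * (M + B) = B -> 0 <= B ->
  forall n x, `|Sq b phi g n x| <= B.
Proof.
move=> b0 hg hB B0; elim=> [|n IH] x /=; first by rewrite normr0.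
rewrite normrM ger0_norm // -{1}hB ler_wpM2l //.
by apply: le_trans (ler_normD _ _) _; apply: lerD.
Qed.

Lemma Sq_split (R : realType) (X : Type) (b : R) (phi : X -> X) (g : X -> R) n k x :
  Sq b phi g (n + k) x = Sq b phi g n x + b ^+ n * Sq b phi g k (iter n phi x).
Proof.
elim: n x => [|n IH] x /=; first by rewrite add0r mul1r.
rewrite IH -iterSr /= exprSr; ring.
Qed.

Lemma Sq_diff {R : realType} {X : Type} {b M B : R} {phi : X -> X} {g : X -> R} :
  0 <= b -> (forall x, `|g x| <= M) -> b * (M + B) = B -> 0 <= B ->
  forall n k x, `|Sq b phi g (n + k) x - Sq b phi g n x| <= b ^+ n * B.
Proof.
move=> b0 hg hB B0 n k x; rewrite Sq_split addrAC subrr add0r normrM.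
rewrite ger0_norm ?exprn_ge0 // ler_wpM2l ?exprn_ge0 //.
exact: (Sq_bound b0 hg hB B0).
Qed.

Lemma Sq_cvg {R : realType} {X : Type} {b M B : R} {phi : X -> X} {g : X -> R} :
  0 <= b < 1 -> (forall x, `|g x| <= M) -> b * (M + B) = B -> 0 <= B ->
  forall x, cvg ((fun n => Sq b phi g n x) @ \oo).
Proof.
move=> /andP[b0 b1] hg hB B0 x.
apply/cauchy_cvgP/cauchy_exP => e e0.
have [n hn] := @small_geo _ b B e (introT andP (conj b0 b1)) e0.
exists (Sq b phi g n x); exists n => // m /= hm.
rewrite /ball /= -(subnKC hm) distrC.
apply: le_lt_trans hn; rewrite mulrC.
exact: (Sq_diff b0 hg hB B0).
Qed.

Lemma Sq_lim {R : realType} {X : Type} {b M B : R} {phi : X -> X} {g : X -> R} :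
  0 <= b < 1 -> (forall x, `|g x| <= M) -> b * (M + B) = B -> 0 <= B ->
  forall n x, `|lim ((fun m => Sq b phi g m x) @ \oo) - Sq b phi g n x| <= b ^+ n * B.
Proof.
move=> hb hg hB B0 n x.
have cv : (fun m => Sq b phi g m x) @ \oo --> lim ((fun m => Sq b phi g m x) @ \oo) := Sq_cvg hb hg hB B0 x.
have /andP[b0 b1] := hb.
apply/ler_addgt0Pr => e e0.
move/cvgrPdist_lt: cv => /(_ e e0) => -[N _ hN].
have h1 := hN (N + n)%N (leq_addr _ _).
have h2 := Sq_diff (phi:=phi) b0 hg hB B0 n N x.
rewrite addnC in h1.
set L := limn _ in h1 *.
have -> : L - Sq b phi g n x = (L - Sq b phi g (n + N) x) + (Sq b phi g (n + N) x - Sq b phi g n x) by ring.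
apply: le_trans (ler_normD _ _) _.
by rewrite addrC lerD // ltW.
Qed.

Definition Lq {R : realType} {X : Type} (b : R) (phi : X -> X) (g : X -> R) (x : X) : R :=
  lim ((fun m => Sq b phi g m x) @ \oo).

Lemma Lq_eq {R : realType} {X : Type} {b M B : R} {phi : X -> X} {g : X -> R} :
  0 <= b < 1 -> (forall x, `|g x| <= M) -> b * (M + B) = B -> 0 <= B ->
  forall x, Lq b phi g x = b * (g x + Lq b phi g (phi x)).
Proof.
move=> hb hg hB B0 x; have /andP[b0 b1] := hb.
apply/eqP; rewrite -subr_eq0; apply/eqP.
apply: (@zero_geo _ b (2 * b * B)) => // n.
have h1 := Sq_lim (phi:=phi) hb hg hB B0 n.+1 x.
have h2 := Sq_lim (phi:=phi) hb hg hB B0 n (phi x).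
rewrite /= in h1.
rewrite /Lq.
set L1 := limn _ in h1 *; set L2 := limn _ in h2 *.
have -> : L1 - b * (g x + L2) = (L1 - b * (g x + Sq b phi g n (phi x))) - b * (L2 - Sq b phi g n (phi x)) by ring.
apply: le_trans (ler_normB _ _) _.
have -> : 2 * b * B * b ^+ n = b ^+ n.+1 * B + b * (b ^+ n * B) by rewrite exprS; ring.
apply: lerD => //.
by rewrite normrM ger0_norm // ler_wpM2l.
Qed.

Definition lc {R : realType} {X : Type} (O : set (set X)) (f : X -> R) : Prop :=
  forall x0 (e : R), 0 < e -> exists U, [/\ O U, U x0 & forall x, U x -> `|f x - f x0| < e].

Lemma cont_lc {R : realType} {X : Type} (O : set (set X)) (f : X -> R) :
  cont_real O f -> lc O f.
Proof.
move=> hf x0 e e0; exists (f @^-1` (ball (f x0) e)); split.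
- by apply: hf; exact: ball_open.
- by rewrite /= /ball /= subrr normr0.
- by move=> x; rewrite /= /ball /= distrC.
Qed.

Lemma lc_cont {R : realType} {X : Type} (O : set (set X)) (f : X -> R) :
  is_topology O -> lc O f -> cont_real O f.
Proof.
move=> [_ _ hU] hf A oA.
have -> : f @^-1` A = \bigcup_(U in [set U | O U /\ U `<=` f @^-1` A]) U.
  apply/seteqP; split => [x Ax|x [U [_ hU'] Ux]]; last exact: hU'.
  have := oA _ Ax; move=> /nbhs_ballP [e /= e0 he].
  have [U [OU Ux hUx]] := hf x e e0.
  exists U => //; split => // z Uz; apply: he.
  by rewrite /ball /= distrC; apply: hUx.
by apply: hU => U [].
Qed.

Lemma lc_comp {R : realType} {X : Type} (O : set (set X)) (phi : X -> X) (f : X -> R) :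
  cont_self O phi -> lc O f -> lc O (fun x => f (phi x)).
Proof.
move=> hphi hf x0 e e0; have [U [OU Ux hUx]] := hf (phi x0) e e0.
exists (phi @^-1` U); split => //; first exact: hphi.
by move=> x /hUx.
Qed.

Lemma lc_comb {R : realType} {X : Type} (O : set (set X)) (b : R) (f h : X -> R) :
  is_topology O -> 0 <= b <= 1 -> lc O f -> lc O h -> lc O (fun x => b * (f x + h x)).
Proof.
move=> [_ hI _] /andP[b0 b1] hf hh x0 e e0.
have e2 : 0 < e / 2 by rewrite divr_gt0.
have [U [OU Ux hUx]] := hf x0 _ e2.
have [V [OV Vx hVx]] := hh x0 _ e2.
exists (U `&` V); split => //; first exact: hI.
move=> x [Ux' Vx'].
rewrite -mulrBr normrM ger0_norm //.
apply: le_lt_trans (ler_piMl (normr_ge0 _) b1) _.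
have -> : f x + h x - (f x0 + h x0) = (f x - f x0) + (h x - h x0) by ring.
apply: le_lt_trans (ler_normD _ _) _.
by rewrite (splitr e) ltrD // ?hUx ?hVx.
Qed.

Lemma lc_Sq {R : realType} {X : Type} (O : set (set X)) (b : R) (phi : X -> X) (g : X -> R) :
  is_topology O -> 0 <= b <= 1 -> cont_self O phi -> lc O g -> forall n, lc O (Sq b phi g n).
Proof.
move=> hO hb hphi hg; elim=> [|n IH] /=.
  move=> x0 e e0; exists setT; split => //; first by case: hO.
  by move=> x _; rewrite subrr normr0.
apply: lc_comb => //; exact: lc_comp.
Qed.

Lemma lc_Lq {R : realType} {X : Type} (O : set (set X)) {b M B : R} {phi : X -> X} {g : X -> R} :
  is_topology O -> cont_self O phi -> lc O g ->
  0 <= b < 1 -> (forall x, `|g x| <= M) -> b * (M + B) = B -> 0 <= B ->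
  lc O (Lq b phi g).
Proof.
move=> hO hphi hgc hb hg hB B0 x0 e e0.
have e3 : 0 < e / 3 by rewrite divr_gt0.
have [n hn] := @small_geo _ b B _ hb e3.
have hb' : 0 <= b <= 1 by case/andP: hb => -> /ltW ->.
have [U [OU Ux hUx]] := @lc_Sq _ _ O b phi g hO hb' hphi hgc n x0 _ e3.
exists U; split => // x Ux'.
have h1 := Sq_lim (phi:=phi) hb hg hB B0 n x.
have h2 := Sq_lim (phi:=phi) hb hg hB B0 n x0.
rewrite /Lq; set L1 := limn _ in h1 *; set L2 := limn _ in h2 *.
have -> : L1 - L2 = (L1 - Sq b phi g n x) + (Sq b phi g n x - Sq b phi g n x0) - (L2 - Sq b phi g n x0) by ring.
apply: le_lt_trans (ler_normB _ _) _.
have -> : e = e / 3 + e / 3 + e / 3 by field.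
have hn' : b ^+ n * B <= e / 3 by rewrite mulrC ltW.
apply: ltr_leD; last exact: le_trans h2 hn'.
apply: le_lt_trans (ler_normD _ _) _.
apply: ler_ltD; first exact: le_trans h1 hn'.
exact: hUx.
Qed.

Lemma Sq_meas {R : realType} {X : Type} {d : measure_display} {Y : measurableType d}
  (b : R) (phi : X -> X) (gamma : X * Y -> R) :
  (forall x, measurable_fun setT (fun y => gamma (x, y))) ->
  forall n x, measurable_fun setT (fun y => Sq b phi (fun x => gamma (x, y)) n x).
Proof.
move=> hm; elim=> [|n IH] x /=; first exact: measurable_cst.
apply: (measurable_realfun.measurable_funM (f := cst b)); first exact: measurable_cst.
exact: measurable_realfun.measurable_funD.
Qed.

Lemma Lq_meas {R : realType} {X : Type} {d : measure_display} {Y : measurableType d}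
  (b M B : R) (phi : X -> X) (gamma : X * Y -> R) :
  (forall x, measurable_fun setT (fun y => gamma (x, y))) ->
  0 <= b < 1 -> (forall x y, `|gamma (x, y)| <= M) -> b * (M + B) = B -> 0 <= B ->
  forall x, measurable_fun setT (fun y => Lq b phi (fun x => gamma (x, y)) x).
Proof.
move=> hm hb hg hB B0 x.
apply: (measurable_realfun.measurable_fun_cvg (h := fun n y => Sq b phi (fun x => gamma (x, y)) n x)).
  by move=> m; exact: Sq_meas.
move=> y _; exact: (Sq_cvg hb (hg ^~ y) hB B0).
Qed.

Lemma Lq_zero {R : realType} {X : Type} {b M B : R} {phi : X -> X} {g : X -> R} :
  0 <= b < 1 -> (forall x, g x = 0) -> b * (M + B) = B -> 0 <= B -> 0 <= M ->
  forall x, Lq b phi g x = 0.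
Proof.
move=> hb h0 hB B0 M0.
have hg : forall x, `|g x| <= M by move=> x; rewrite h0 normr0.
have hS : forall n x, Sq b phi g n x = 0.
  by elim=> [|n IH] x //=; rewrite h0 IH addr0 mulr0.
move=> x; apply: (@zero_geo _ b B) => // n.
have := Sq_lim (phi:=phi) hb hg hB B0 n x.
by rewrite hS subr0 mulrC.
Qed.

Theorem mainTheorem12 (R : realType) (X : Type) (d : measure_display)
  (Y : measurableType d) (mu : {measure set Y -> \bar R}) (alpha : R)
  (tau : Y -> set (set X)) (phi : X -> X) (gamma : X * Y -> R) :
  1 < alpha ->
  (forall y, is_topology (tau y)) ->
  (forall y, cont_self (tau y) phi) ->
  bounded_fun2 gamma ->
  (forall y, cont_real (tau y) (fun x => gamma (x, y))) ->
  (forall x, measurable_fun setT (fun y => gamma (x, y))) ->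
  (exists W : set Y, [/\ measurable W, (mu W < +oo)%E &
                        forall x y, ~ W y -> gamma (x, y) = 0]) ->
  exists ghat : X * Y -> R,
    (bounded_fun2 ghat /\
     (forall y, cont_real (tau y) (fun x => ghat (x, y))) /\
     (forall x, mu.-integrable setT (fun y => (ghat (x, y))%:E)) /\
     (forall x y, gamma (x, y) = ghat (phi x, y) - alpha * ghat (x, y))) /\
    (forall g : X * Y -> R,
      bounded_fun2 g ->
      (forall y, cont_real (tau y) (fun x => g (x, y))) ->
      (forall x, mu.-integrable setT (fun y => (g (x, y))%:E)) ->
      (forall x y, gamma (x, y) = g (phi x, y) - alpha * g (x, y)) ->
      g = ghat).
Proof.
move=> a1 htop hphi [M0 hM0] hgc hgm [W [mW muW hW]].
set M := `|M0|.
have M0' : 0 <= M by apply: normr_ge0.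
have hM : forall x y, `|gamma (x, y)| <= M.
  by move=> x y; apply: le_trans (hM0 x y) (ler_norm _).
have a0 : 0 < alpha by apply: lt_trans a1.
have a10 : 0 < alpha - 1 by rewrite subr_gt0.
set b := alpha^-1.
set B := M / (alpha - 1).
have B0 : 0 <= B by rewrite divr_ge0 // ltW.
have hb : 0 <= b < 1.
  by rewrite invr_ge0 ltW //= invf_lt1.
have hB : b * (M + B) = B.
  rewrite /b /B; field; rewrite ?gt_eqF //; apply/andP; split; rewrite gt_eqF //.
have ab : alpha * b = 1 by rewrite /b mulfV // gt_eqF.
set L := fun x y => Lq b phi (fun x => gamma (x, y)) x.
have hLeq : forall x y, L x y = b * (gamma (x, y) + L (phi x) y).
  by move=> x y; exact: (Lq_eq hb (hM ^~ y) hB B0).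
have hLb : forall x y, `|L x y| <= B.
  move=> x y; have := Sq_lim (phi:=phi) hb (hM ^~ y) hB B0 0 x.
  by rewrite /= subr0 expr0 mul1r.
exists (fun p => - L p.1 p.2); split; [split; [|split; [|split]] |].
- by exists B => x y /=; rewrite normrN.
- move=> y; apply: lc_cont => //.
  have hl := @lc_Lq _ _ (tau y) _ _ _ _ _ (htop y) (hphi y) (@cont_lc _ _ _ _ (hgc y)) hb (hM ^~ y) hB B0.
  - move=> x0 e e0; have [U [OU Ux hU]] := hl x0 e e0.
    exists U; split => // x /hU h /=; by rewrite -opprD normrN.
- move=> x; apply/integrableP; split.
    apply/measurable_realfun.measurable_EFinP => /=.
    apply: measurable_realfun.measurable_funN.
    exact: (@Lq_meas _ _ _ _ b M B phi gamma hgm hb hM hB B0 x).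
  have hz : forall y, ~ W y -> L x y = 0.
    by move=> y ny; exact: (Lq_zero hb (fun x' => hW x' y ny) hB B0 M0' x).
  have mL : measurable_fun setT (fun y => L x y).
    exact: (@Lq_meas _ _ _ _ b M B phi gamma hgm hb hM hB B0 x).
  have mi : measurable_fun setT (EFin \o (\1_W : Y -> R)).
    by apply/measurable_realfun.measurable_EFinP; exact: measurable_indic.
  apply: (@le_lt_trans _ _ (\int[mu]_(y in setT) (B%:E * (\1_W y : R)%:E))%E).
    apply: ge0_le_integral => //.
    - apply: measurableT_comp => //; apply/measurable_realfun.measurable_EFinP.
      exact: measurable_realfun.measurable_funN.
    - exact: measurable_funeM.
    move=> y _ /=; rewrite -EFinM lee_fin normrN.
    have [Wy|nWy] := pselect (W y).
      by rewrite indicE mem_set // mulr1.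
    by rewrite hz // normr0 mulr_ge0 // indicE.
  rewrite ge0_integralZl //.
  by rewrite integral_indic // setIT lte_mul_pinfty.
- move=> x y /=; rewrite (hLeq x y); set l := L (phi x) y.
  have -> : - l - alpha * - (b * (gamma (x, y) + l)) = (alpha * b) * (gamma (x, y) + l) - l by ring.
  by rewrite ab mul1r addrK.
move=> g [Mg hMg] _ _ hgeq.
apply/funext => -[x y] /=.
apply/eqP; rewrite -subr_eq0; apply/eqP.
set C := `|Mg| + B.
have hh : forall x, g (phi x, y) - - L (phi x) y = alpha * (g (x, y) - - L x y).
  move=> z; have := hgeq z y; rewrite (hLeq z y).
  move=> e; have : g (phi z, y) = gamma (z, y) + alpha * g (z, y) by rewrite e; ring.
  move=> ->; rewrite mulrBr mulrN mulrA ab mul1r; ring.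
apply: (@zero_geo _ b C) => // n.
elim: n x => [|n IH] z.
  rewrite expr0 mulr1 /C; apply: le_trans (ler_normB _ _) _.
  rewrite normrN lerD //; apply: le_trans (hMg z y) (ler_norm _).
have -> : g (z, y) - - L z y = b * (g (phi z, y) - - L (phi z) y).
  by rewrite hh mulrA (mulrC b) ab mul1r.
rewrite normrM ger0_norm ?(andP hb).1 // exprS mulrCA ler_wpM2l //.
by case/andP: hb.
Qed.
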